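(* For every $\theta>0$ one has $1-4(\theta+1)\lambda(\theta)>0$, so $j$ is well defined on $(0,\infty)$, and $j$ satisfies for all $\theta>0$ \[\big(4\theta\lambda(\theta)-e^{-f'(\theta)}\big)j'(\theta)+\frac{f''(\theta)}{2}\big(4\theta^2\lambda(\theta)+e^{-f'(\theta)}\big)+4\lambda(\theta)\Big(\frac12-\theta\Big)=0.\]
   Context: Define $\lambda:[0,\infty)\to(0,1/4]$ by $\lambda(0)=1/4$ and, for $\theta>0$, $\lambda(\theta)$ is the unique $\lambda\in(0,1/4)$ with $-1+\frac{\operatorname{artanh}(\sqrt{1-4\lambda})}{\sqrt{1-4\lambda}}=\theta$. For $\theta>0$ set $f(\theta)=-\ln\lambda(\theta)-2\theta-\theta\ln\big(1-4\lambda(\theta)\big)$ and $j(\theta)=-\tfrac12\ln\big(1-4(\theta+1)\lambda(\theta)\big)+\tfrac12\ln 2$. *)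

(* Defs.v *)
From Stdlib Require Import Reals Lra ClassicalEpsilon.
From Coquelicot Require Import Coquelicot.
Open Scope R_scope.

Definition artanh (x : R) : R := / 2 * ln ((1 + x) / (1 - x)).

Definition lam_eq (theta l : R) : Prop :=
  0 < l < / 4 /\
  -1 + artanh (sqrt (1 - 4 * l)) / sqrt (1 - 4 * l) = theta.

(* lambda(0) = 1/4; for theta > 0, the (unique) l in (0,1/4) solving lam_eq.
   (Values for theta < 0 are irrelevant junk.) *)
Definition lam (theta : R) : R :=
  match Rle_dec theta 0 with
  | left _ => / 4
  | right _ => epsilon (inhabits 0) (lam_eq theta)
  end.

Definition f_fun (theta : R) : R :=
  - ln (lam theta) - 2 * theta - theta * ln (1 - 4 * lam theta).

Definition j_fun (theta : R) : R :=
  - / 2 * ln (1 - 4 * (theta + 1) * lam theta) + / 2 * ln 2.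

(* Main.v *)
Require Import Defs.
From Stdlib Require Import Reals Lra ClassicalEpsilon.
From Coquelicot Require Import Coquelicot.
Open Scope R_scope.

Lemma artanh_der x : -1 < x < 1 -> is_derive artanh x (/ (1 - x^2)).
Proof.
  intros Hx. unfold artanh.
  auto_derive.
  - repeat split; try lra. apply Rdiv_lt_0_compat; lra.
  - field. split; nra.
Qed.

Definition G (s : R) : R := artanh s / s - 1.
Definition dG (s : R) : R := (s / (1 - s^2) - artanh s) / s^2.

Lemma G_der s : 0 < s < 1 -> is_derive G s (dG s).
Proof.
  intros Hs. unfold G, dG, artanh.
  auto_derive.
  - repeat split; try lra. apply Rdiv_lt_0_compat; lra.
  - unfold Rdiv, Rminus. set (L := ln _). field. repeat split; try nra.
Qed.

Lemma artanh0 : artanh 0 = 0.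
Proof. unfold artanh. replace ((1+0)/(1-0)) with 1 by field. rewrite ln_1. ring. Qed.

Lemma artanh_bounds s : 0 < s < 1 -> s < artanh s < s / (1 - s^2).
Proof.
  intros Hs. split.
  - destruct (MVT_cor2 (fun x => artanh x - x) (fun x => x^2 / (1 - x^2)) 0 s) as [c [Hc1 Hc2]].
    lra.
    { intros c Hc. apply is_derive_Reals.
      unfold artanh. auto_derive.
      repeat split; try lra. apply Rdiv_lt_0_compat; lra.
      unfold Rdiv, Rminus. field. repeat split; nra. }
    rewrite artanh0 in Hc1.
    assert (0 < c ^ 2 / (1 - c ^ 2) * (s - 0)).
    { apply Rmult_lt_0_compat; [apply Rdiv_lt_0_compat|]; nra. }
    lra.
  - destruct (MVT_cor2 (fun x => x / (1 - x^2) - artanh x) (fun x => 2 * x^2 / (1 - x^2)^2) 0 s) as [c [Hc1 Hc2]].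
    lra.
    { intros c Hc. apply is_derive_Reals.
      unfold artanh. auto_derive.
      repeat split; try lra; try nra. apply Rdiv_lt_0_compat; lra.
      unfold Rdiv, Rminus. field. repeat split; nra. }
    rewrite artanh0 in Hc1.
    assert (0 < 2 * c ^ 2 / (1 - c ^ 2)^2 * (s - 0)).
    { apply Rmult_lt_0_compat; [apply Rdiv_lt_0_compat|]; try lra.
      assert (0 < c^2) by (apply pow_lt; lra). lra. apply pow_lt. nra. }
    replace (0 / (1 - 0^2) - 0) with 0 in Hc1 by field.
    lra.
Qed.

Lemma dG_pos s : 0 < s < 1 -> 0 < dG s.
Proof.
  intros Hs. unfold dG. apply Rdiv_lt_0_compat; [|apply pow_lt; lra].
  pose proof (artanh_bounds s Hs). lra.
Qed.

Lemma G_incr x y : 0 < x -> x < y -> y < 1 -> G x < G y.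
Proof.
  intros. destruct (MVT_cor2 G dG x y) as [c [Hc1 Hc2]]. lra.
  { intros c Hc. apply is_derive_Reals. apply G_der. lra. }
  assert (0 < dG c * (y - x)). { apply Rmult_lt_0_compat. apply dG_pos; lra. lra. }
  lra.
Qed.

Lemma G_pos s : 0 < s < 1 -> 0 < G s.
Proof.
  intros Hs. unfold G. pose proof (artanh_bounds s Hs).
  assert (1 < artanh s / s). { apply (Rmult_lt_reg_r s). lra. field_simplify; lra. }
  lra.
Qed.

Lemma G_cont s : 0 < s < 1 -> continuity_pt G s.
Proof.
  intros Hs. apply derivable_continuous_pt. exists (dG s). apply is_derive_Reals, G_der, Hs.
Qed.

Lemma G_exists th : 0 < th -> exists s, 0 < s < 1 /\ G s = th.
Proof.
  intros Hth.
  set (a := sqrt (th / (2 * th + 2))).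
  assert (Ha2 : a ^ 2 = th / (2 * th + 2)).
  { unfold a. apply pow2_sqrt. apply Rlt_le, Rdiv_lt_0_compat; lra. }
  assert (Ha0 : 0 < a). { unfold a. apply sqrt_lt_R0, Rdiv_lt_0_compat; lra. }
  assert (Ha2b : a ^ 2 < / 2). { rewrite Ha2. apply (Rmult_lt_reg_r (2*th+2)). lra.
     field_simplify; lra. }
  assert (Ha1 : a < 1) by nra.
  assert (HGa : G a < th).
  { pose proof (artanh_bounds a (conj Ha0 Ha1)) as [_ H].
    unfold G. 
    assert (artanh a / a < / (1 - a^2)).
    { apply (Rmult_lt_reg_r a). lra. unfold Rdiv. rewrite Rmult_assoc, Rinv_l by lra.
      replace (/ (1 - a^2) * a) with (a / (1 - a^2)) by (field; nra). lra. }
    assert (/ (1 - a^2) - 1 < th).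
    { rewrite Ha2. replace (/ (1 - th / (2 * th + 2)) - 1) with (th / (th + 2)) by (field; lra).
      apply (Rmult_lt_reg_r (th+2)). lra. field_simplify; nra. }
    lra. }
  set (k := 2 * th + 4).
  set (b := 1 - exp (- k)).
  assert (Hek : 0 < exp (-k) < 1).
  { split. apply exp_pos. rewrite <- exp_0. apply exp_increasing. unfold k; lra. }
  assert (Hb0 : 0 < b < 1) by (unfold b; lra).
  assert (HGb : th < G b).
  { assert (Hart : th + 2 < artanh b).
    { unfold artanh. 
      assert (ln (/ (1 - b)) < ln ((1 + b) / (1 - b))).
      { apply ln_increasing. apply Rinv_0_lt_compat; lra.
        unfold Rdiv. rewrite <- (Rmult_1_l (/ (1 - b))) at 1. apply Rmult_lt_compat_r.
        apply Rinv_0_lt_compat; lra. lra. }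
      replace (1 - b) with (exp (- k)) in H |- * by (unfold b; ring).
      rewrite <- exp_Ropp, ln_exp in H. unfold k in *. lra. }
    unfold G. assert (artanh b <= artanh b / b).
    { apply (Rmult_le_reg_r b). lra. unfold Rdiv. rewrite Rmult_assoc, Rinv_l by lra. nra. }
    lra. }
  assert (Hab : a < b).
  { destruct (Rlt_le_dec a b) as [h|h]; auto. exfalso.
    destruct (Rle_lt_or_eq_dec _ _ h) as [h'|h'].
    - pose proof (G_incr b a ltac:(lra) h' Ha1). lra.
    - rewrite h' in HGb. lra. }
  destruct (Ranalysis5.IVT_interv (fun x => G x - th) a b) as [z [Hz1 Hz2]].
  { intros x Hx. apply continuity_pt_minus. apply G_cont. lra. apply continuity_pt_const. intros u v; reflexivity. }
  exact Hab. lra. lra.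
  exists z. split. lra. lra.
Qed.

Definition sf (th : R) : R := sqrt (1 - 4 * lam th).

Lemma lam_spec th : 0 < th -> lam_eq th (lam th).
Proof.
  intros Hth. unfold lam. destruct (Rle_dec th 0) as [h|h]. lra.
  apply epsilon_spec. destruct (G_exists th Hth) as [s [Hs HG]].
  exists ((1 - s^2)/4). unfold lam_eq. split. split; nra.
  replace (1 - 4 * ((1 - s^2)/4)) with (s^2) by field.
  rewrite sqrt_pow2 by lra. unfold G in HG. lra.
Qed.

Lemma sf_spec th : 0 < th -> (0 < sf th < 1) /\ G (sf th) = th /\ lam th = (1 - sf th ^ 2) / 4.
Proof.
  intros Hth. destruct (lam_spec th Hth) as [Hl He].
  assert (Hsq : sf th ^ 2 = 1 - 4 * lam th).
  { unfold sf. apply pow2_sqrt. lra. }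
  assert (Hp : 0 < sf th). { unfold sf. apply sqrt_lt_R0. lra. }
  split; [split|split].
  - exact Hp.
  - nra.
  - unfold G. fold (sf th) in He. lra.
  - lra.
Qed.

Lemma G_inj x y : 0 < x < 1 -> 0 < y < 1 -> G x = G y -> x = y.
Proof.
  intros Hx Hy H. destruct (Rtotal_order x y) as [h|[h|h]]; auto.
  - pose proof (G_incr x y ltac:(lra) h ltac:(lra)). lra.
  - pose proof (G_incr y x ltac:(lra) h ltac:(lra)). lra.
Qed.

Lemma sf_G s : 0 < s < 1 -> sf (G s) = s.
Proof.
  intros Hs. pose proof (G_pos s Hs). destruct (sf_spec (G s) H) as [h1 [h2 _]].
  apply G_inj; auto.
Qed.

Lemma sf_incr x y : 0 < x -> x < y -> sf x < sf y.
Proof.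
  intros Hx Hxy. destruct (sf_spec x Hx) as [h1 [h2 _]]. destruct (sf_spec y ltac:(lra)) as [h3 [h4 _]].
  destruct (Rlt_le_dec (sf x) (sf y)) as [h|h]; auto. exfalso.
  destruct (Rle_lt_or_eq_dec _ _ h) as [h'|h'].
  - pose proof (G_incr (sf y) (sf x) ltac:(lra) h' ltac:(lra)). lra.
  - rewrite h' in h4. lra.
Qed.

Lemma sf_le x y : 0 < x -> x <= y -> sf x <= sf y.
Proof.
  intros Hx Hxy. destruct (Rle_lt_or_eq_dec _ _ Hxy) as [h|h].
  apply Rlt_le, sf_incr; auto. rewrite h; apply Rle_refl.
Qed.

Lemma G_dpt a : 0 < a < 1 -> derivable_pt G a.
Proof. intros Ha. exists (dG a). apply is_derive_Reals, G_der, Ha. Qed.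

Lemma sf_der th : 0 < th -> is_derive sf th (/ dG (sf th)).
Proof.
  intros Hth.
  destruct (sf_spec (th/2) ltac:(lra)) as [Hl1 [Hl2 _]].
  destruct (sf_spec (th+1) ltac:(lra)) as [Hu1 [Hu2 _]].
  destruct (sf_spec th Hth) as [Hs1 [Hs2 _]].
  assert (Hlu : sf (th/2) < sf (th+1)) by (apply sf_incr; lra).
  assert (Hcont : continuity_pt sf th).
  { apply (Ranalysis5.continuity_pt_recip_interv G sf (sf (th/2)) (sf (th+1)) Hlu).
    - intros x y Hx Hxy Hy. apply G_incr; lra.
    - intros x Hx1 Hx2. rewrite Hl2 in Hx1. unfold comp, id.
      destruct (sf_spec x ltac:(lra)) as [_ [h _]]. exact h.
    - intros x Hx1 Hx2. rewrite Hl2 in Hx1. rewrite Hu2 in Hx2. split; apply sf_le; lra.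
    - intros a Ha. apply G_cont. lra.
    - rewrite Hl2, Hu2. lra. }
  assert (Prf : forall a, sf (th/2) <= a <= sf (th+1) -> derivable_pt G a).
  { intros a Ha. apply G_dpt. lra. }
  assert (Hin : sf (th/2) <= sf th <= sf (th+1)) by (split; apply sf_le; lra).
  pose proof (Ranalysis5.derivable_pt_lim_recip_interv G sf (th/2) (th+1) th Prf Hcont
     ltac:(lra) ltac:(lra) Hin) as H.
  assert (Hd : derive_pt G (sf th) (Prf (sf th) Hin) = dG (sf th)).
  { apply derive_pt_eq_0. apply is_derive_Reals, G_der. lra. }
  rewrite Hd in H.
  apply is_derive_Reals. replace (/ dG (sf th)) with (1 / dG (sf th)) by (unfold Rdiv; ring).
  apply H.
  - intros x Hx. unfold comp, id. destruct (sf_spec x ltac:(lra)) as [_ [h _]]. exact h.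
  - pose proof (dG_pos (sf th) Hs1). lra.
Qed.

Lemma loc_pos th : 0 < th -> locally th (fun t => 0 < t).
Proof. intros H. apply (open_gt 0 th H). Qed.

Definition F1 t := - ln ((1 - sf t ^ 2) / 4) - 2 * t - t * ln (sf t ^ 2).
Definition F2 t := - ln (sf t ^ 2).
Definition J1 t := - / 2 * ln (1 - (t + 1) * (1 - sf t ^ 2)) + / 2 * ln 2.

Lemma f_F1 t : 0 < t -> f_fun t = F1 t.
Proof.
  intros Ht. destruct (sf_spec t Ht) as [_ [_ Hl]]. unfold f_fun, F1. rewrite Hl.
  replace (1 - 4 * ((1 - sf t ^ 2) / 4)) with (sf t ^ 2) by field. reflexivity.
Qed.

Lemma j_J1 t : 0 < t -> j_fun t = J1 t.
Proof.
  intros Ht. destruct (sf_spec t Ht) as [_ [_ Hl]]. unfold j_fun, J1. rewrite Hl.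
  replace (1 - 4 * (t + 1) * ((1 - sf t ^ 2) / 4)) with (1 - (t + 1) * (1 - sf t ^ 2)) by field.
  reflexivity.
Qed.

Lemma art_eq t : 0 < t -> artanh (sf t) = (t + 1) * sf t.
Proof.
  intros Ht. destruct (sf_spec t Ht) as [Hs [HG _]]. unfold G in HG.
  replace (t + 1) with (artanh (sf t) / sf t) by lra. field. lra.
Qed.

Lemma Dsf t : 0 < t -> Derive sf t = / dG (sf t).
Proof. intros Ht. apply is_derive_unique, sf_der, Ht. Qed.

Lemma Dsf2 t : 0 < t ->
  0 < sf t ^ 2 - t * (1 - sf t ^ 2) /\
  Derive sf t = sf t * (1 - sf t ^ 2) / (sf t ^ 2 - t * (1 - sf t ^ 2)).
Proof.
  intros Ht. destruct (sf_spec t Ht) as [Hs _].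
  pose proof (art_eq t Ht) as Ha. pose proof (Dsf t Ht) as Hd.
  pose proof (dG_pos _ Hs) as HdG.
  assert (E : dG (sf t) = (sf t ^ 2 - t * (1 - sf t ^ 2)) / (sf t * (1 - sf t ^ 2))).
  { unfold dG. rewrite Ha. field. split; nra. }
  assert (P : 0 < sf t ^ 2 - t * (1 - sf t ^ 2)).
  { rewrite E in HdG. assert (0 < sf t * (1 - sf t ^ 2)) by nra.
    apply (Rmult_lt_reg_r (/ (sf t * (1 - sf t ^ 2)))). apply Rinv_0_lt_compat; lra.
    rewrite Rmult_0_l. exact HdG. }
  split; auto. rewrite Hd, E. field. split; nra.
Qed.

Lemma F1_der t : 0 < t -> is_derive F1 t (F2 t).
Proof.
  intros Ht. destruct (sf_spec t Ht) as [Hs _].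
  destruct (Dsf2 t Ht) as [P Hd].
  unfold F1, F2. auto_derive.
  - repeat split; try (exists (/ dG (sf t)); apply sf_der; exact Ht).
    apply Rdiv_lt_0_compat; nra. nra.
  - change (Derive (fun x => sf x) t) with (Derive sf t). rewrite Hd.
    replace (sf t * (sf t * 1)) with (sf t ^ 2) by ring.
    set (L := ln (sf t ^ 2)). field. repeat split; nra.
Qed.

Lemma u_pos t : 0 < t -> 0 < 1 - (t + 1) * (1 - sf t ^ 2).
Proof.
  intros Ht. destruct (sf_spec t Ht) as [Hs _].
  pose proof (art_eq t Ht) as Ha. pose proof (artanh_bounds _ Hs) as [_ Hb].
  rewrite Ha in Hb.
  assert ((t + 1) * (1 - sf t ^ 2) * sf t < sf t).
  { apply (Rmult_lt_reg_r (/ (1 - sf t ^ 2))). apply Rinv_0_lt_compat; nra.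
    replace ((t + 1) * (1 - sf t ^ 2) * sf t * / (1 - sf t ^ 2)) with ((t + 1) * sf t) by (field; nra).
    exact Hb. }
  nra.
Qed.

Lemma F2_der t : 0 < t -> is_derive F2 t
  (- 2 * (1 - sf t ^ 2) / (sf t ^ 2 - t * (1 - sf t ^ 2))).
Proof.
  intros Ht. destruct (sf_spec t Ht) as [Hs _].
  destruct (Dsf2 t Ht) as [P Hd].
  unfold F2. auto_derive.
  - repeat split; try (exists (/ dG (sf t)); apply sf_der; exact Ht). nra.
  - change (Derive (fun x => sf x) t) with (Derive sf t). rewrite Hd.
    field. repeat split; nra.
Qed.

Lemma J1_der t : 0 < t -> is_derive J1 t
  (- / 2 * (- (1 - sf t ^ 2) + 2 * (t + 1) * sf t ^ 2 * (1 - sf t ^ 2) / (sf t ^ 2 - t * (1 - sf t ^ 2)))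
    / (1 - (t + 1) * (1 - sf t ^ 2))).
Proof.
  intros Ht. destruct (sf_spec t Ht) as [Hs _].
  destruct (Dsf2 t Ht) as [P Hd]. pose proof (u_pos t Ht) as U.
  unfold J1. auto_derive.
  - repeat split; try (exists (/ dG (sf t)); apply sf_der; exact Ht). 
    replace (1 + - ((t + 1) * (1 + - (sf t * (sf t * 1))))) with (1 - (t + 1) * (1 - sf t ^ 2)) by ring.
    exact U.
  - change (Derive (fun x => sf x) t) with (Derive sf t). rewrite Hd.
    field. repeat split; nra.
Qed.

Theorem proposition3 :
  forall theta : R, 0 < theta ->
    0 < 1 - 4 * (theta + 1) * lam theta /\
    ex_derive f_fun theta /\ ex_derive (Derive f_fun) theta /\ ex_derive j_fun theta /\
    (4 * theta * lam theta - exp (- Derive f_fun theta)) * Derive j_fun theta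
    + Derive (Derive f_fun) theta / 2
        * (4 * theta ^ 2 * lam theta + exp (- Derive f_fun theta))
    + 4 * lam theta * (/ 2 - theta) = 0.
Proof.
  intros th Hth.
  destruct (sf_spec th Hth) as [Hs [_ Hl]].
  destruct (Dsf2 th Hth) as [P _]. pose proof (u_pos th Hth) as U.
  assert (Hf : forall t, 0 < t -> is_derive f_fun t (F2 t)).
  { intros t Ht. apply (is_derive_ext_loc F1). 
    eapply filter_imp. 2: apply (loc_pos t Ht). intros y Hy. symmetry. apply f_F1, Hy.
    apply F1_der, Ht. }
  assert (HDf : locally th (fun t => F2 t = Derive f_fun t)).
  { eapply filter_imp. 2: apply (loc_pos th Hth). intros y Hy. symmetry.
    apply is_derive_unique, Hf, Hy. }
  assert (Hff : is_derive (Derive f_fun) th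
     (- 2 * (1 - sf th ^ 2) / (sf th ^ 2 - th * (1 - sf th ^ 2)))).
  { apply (is_derive_ext_loc F2). exact HDf. apply F2_der, Hth. }
  assert (Hj : is_derive j_fun th
    (- / 2 * (- (1 - sf th ^ 2) + 2 * (th + 1) * sf th ^ 2 * (1 - sf th ^ 2) / (sf th ^ 2 - th * (1 - sf th ^ 2)))
    / (1 - (th + 1) * (1 - sf th ^ 2)))).
  { apply (is_derive_ext_loc J1).
    eapply filter_imp. 2: apply (loc_pos th Hth). intros y Hy. symmetry. apply j_J1, Hy.
    apply J1_der, Hth. }
  split; [|split; [|split; [|split]]].
  - rewrite Hl. replace (1 - 4 * (th + 1) * ((1 - sf th ^ 2) / 4)) with (1 - (th + 1) * (1 - sf th ^ 2)) by field.
    exact U.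
  - eexists. apply Hf, Hth.
  - eexists. exact Hff.
  - eexists. exact Hj.
  - rewrite (is_derive_unique _ _ _ (Hf th Hth)), (is_derive_unique _ _ _ Hff), (is_derive_unique _ _ _ Hj).
    unfold F2. rewrite Ropp_involutive, exp_ln by nra. rewrite Hl.
    field. lra.
Qed.
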